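(* For all integers $p\ge1$ and $q\ge3$, $\chi_s(UC_q\,\square\,BC_{2p+1})>4$.
   Context: A signed graph $(G,\sigma)$ is a simple loopless undirected graph with a signature $\sigma:E(G)\to\{+1,-1\}$. Switching a vertex negates the signs of its incident edges; two signatures are equivalent if one is obtained from the other by switching a set of vertices. A homomorphism of $(G,\sigma)$ to $(H,\pi)$ is a graph homomorphism $\varphi:G\to H$ for which there is a signature $\sigma'$ equivalent to $\sigma$ with $\pi(\varphi(u)\varphi(v))=\sigma'(uv)$ for every edge $uv$; $\chi_s(G,\sigma)$ is the smallest order of a signed graph to which $(G,\sigma)$ admits a homomorphism. $UC_k$ (resp. $BC_k$) denotes a cycle on $k$ vertices with an odd (resp. even) number of negative edges (well defined up to equivalence). The Cartesian product $(G,\sigma)\,\square\,(H,\pi)$ is the signed graph on $G\,\square\,H$ where $(u,v_1)(u,v_2)$ has sign $\pi(v_1v_2)$ and $(u_1,v)(u_2,v)$ has sign $\sigma(u_1u_2)$. *)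

(* Defs.v *)
From mathcomp Require Import all_boot.

(* A signed graph: finite vertex type, adjacency relation, and a signature
   given as a relation; [ssign G u v = true] means the edge uv is NEGATIVE.
   The signature is only meaningful on edges. *)
Record sgraph := SGraph { svert : finType; sadj : rel svert; ssign : rel svert }.
Set Implicit Arguments. Unset Strict Implicit. Unset Printing Implicit Defensive.

Definition simple_sgraph (G : sgraph) : Prop :=
  symmetric (sadj G) /\ irreflexive (sadj G) /\
  (forall u v, sadj G u v -> ssign G u v = ssign G v u).

Definition switch_sign (G : sgraph) (X : {set svert G}) : rel (svert G) :=
  fun u v => ssign G u v (+) (u \in X) (+) (v \in X).

Definition sg_hom (G H : sgraph) (phi : svert G -> svert H) : Prop :=
  (forall u v, sadj G u v -> sadj H (phi u) (phi v)) /\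
  exists X : {set svert G},
    forall u v, sadj G u v -> ssign H (phi u) (phi v) = switch_sign X u v.

Definition is_signed_chi (G : sgraph) (n : nat) : Prop :=
  (exists H : sgraph, simple_sgraph H /\ #|svert H| = n /\
     exists phi, @sg_hom G H phi) /\
  (forall (H : sgraph) (phi : svert G -> svert H),
     simple_sgraph H -> @sg_hom G H phi -> n <= #|svert H|).

Definition cycle_adj (k : nat) : rel 'I_k :=
  fun i j => (val j == i.+1 %% k) || (val i == j.+1 %% k).

(* UC_k: exactly one negative edge, namely {k-1, 0} (odd number of negative edges) *)
Definition UC (k : nat) : sgraph :=
  @SGraph 'I_k (@cycle_adj k)
    (fun i j => ((val i == k.-1) && (val j == 0)) || ((val j == k.-1) && (val i == 0))).

(* BC_k: all edges positive (even number, zero, of negative edges) *)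
Definition BC (k : nat) : sgraph :=
  @SGraph 'I_k (@cycle_adj k) (fun _ _ => false).

Definition sg_box (G H : sgraph) : sgraph :=
  @SGraph (svert G * svert H)%type
    (fun x y => ((x.1 == y.1) && sadj H x.2 y.2) || ((x.2 == y.2) && sadj G x.1 y.1))
    (fun x y => if x.1 == y.1 then ssign H x.2 y.2 else ssign G x.1 y.1).

(* Main.v *)
Require Import Defs.
From Stdlib Require Import Classical_Prop.
From mathcomp Require Import all_boot.
Set Implicit Arguments. Unset Strict Implicit. Unset Printing Implicit Defensive.

Definition Dedge (T : Type) (adj sg : rel T) (P Q : T * bool) : bool :=
  adj P.1 Q.1 && (sg P.1 Q.1 == P.2 (+) Q.2).
Definition tau (T : Type) (P : T * bool) : T * bool := (P.1, ~~ P.2).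

Definition certH (T : Type) (adj sg : rel T) (c : T * bool -> T * bool -> bool)
  (f : T * bool -> bool) : Prop :=
  (forall P Q, Dedge adj sg P Q -> c P Q (+) c (tau P) (tau Q) = ~~ (f P (+) f Q)) /\
  (forall P1 P2 P3 P4, Dedge adj sg P1 P2 -> Dedge adj sg P2 P3 ->
     Dedge adj sg P1 P4 -> Dedge adj sg P4 P3 ->
     c P1 P2 (+) c P2 P3 (+) c P4 P3 (+) c P1 P4 = false).

Lemma Dedge_tau T (adj sg : rel T) P Q :
  Dedge adj sg P Q -> Dedge adj sg (tau P) (tau Q).
Proof. by rewrite /Dedge /= addbN addNb negbK. Qed.

Lemma bsum_const n : \big[addb/false]_(j < n) true = odd n.
Proof.
elim: n => [|n IH]; first by rewrite big_ord0.
by rewrite big_ord_recr /= IH addbT.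
Qed.

Lemma bsum_shift n (F : 'I_n -> bool) :
  \big[addb/false]_(j < n) F (ordS j) = \big[addb/false]_(j < n) F j.
Proof. exact: esym (reindex_inj (@ordS_inj n)). Qed.

Lemma core (T : Type) (adj sg : rel T) c f (N m : nat)
  (Q : nat -> 'I_N -> T * bool) :
  certH adj sg c f -> odd N ->
  (forall i j, i <= m -> Dedge adj sg (Q i j) (Q i (ordS j))) ->
  (forall i j, i < m -> Dedge adj sg (Q i j) (Q i.+1 j)) ->
  (forall j, Q m j = tau (Q 0 j)) -> False.
Proof.
move=> [C1 C3] oddN Ha Hb Hc.
pose R i := \big[addb/false]_(j < N) c (Q i j) (Q i (ordS j)).
have step : forall i, i < m -> R i.+1 = R i.
  move=> i lt.
  pose V j := c (Q i j) (Q i.+1 j).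
  have E : \big[addb/false]_(j < N)
      (c (Q i j) (Q i (ordS j)) (+) c (Q i (ordS j)) (Q i.+1 (ordS j))
       (+) c (Q i.+1 j) (Q i.+1 (ordS j)) (+) c (Q i j) (Q i.+1 j)) = false.
    rewrite big1 // => j _; apply: C3.
    - exact: Ha _ _ (ltnW lt).
    - exact: Hb _ _ lt.
    - exact: Hb _ _ lt.
    - exact: Ha _ _ lt.
  rewrite !big_split /= in E.
  rewrite (bsum_shift (fun j => c (Q i j) (Q i.+1 j))) in E.
  rewrite -/(R i) -/(R i.+1) in E.
  move: E; set S := \big[addb/false]_(j < N) _.
  by case: (R i); case: (R i.+1); case: S.
have R0m : forall k, k <= m -> R k = R 0.
  elim=> [//|k IH] lt. by rewrite step // IH // ltnW.
have := R0m m (leqnn m).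
have E2 : R m (+) R 0 = true.
  rewrite /R; under eq_bigr => j _ do rewrite !Hc.
  rewrite -big_split /=.
  under eq_bigr => j _ do rewrite addbC (C1 _ _ (Ha 0 j (leq0n m))).
  under eq_bigr => j _ do rewrite -addTb.
  rewrite !big_split /= bsum_const oddN.
  rewrite (bsum_shift (fun j => f (Q 0 j))).
  by case: (\big[addb/false]_(j < N) f (Q 0 j)).
by move=> E; rewrite E addbb in E2.
Qed.
Definition cert_tab : seq (seq bool * seq bool) := [::
  ([:: false; false; false; false; false; false; false; true; false; true; false; true], [:: false; false; true; true; true; true; true; true]);
  ([:: false; false; false; false; false; false; false; false; false; false; false; true], [:: false; true; false; true; true; false; true; false]);
  ([:: false; false; false; false; false; false; false; false; false; true; false; false], [:: false; true; true; false; false; true; true; false]);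
  ([:: false; false; false; false; false; false; false; true; false; false; false; false], [:: false; true; false; true; false; true; true; false]);
  ([:: false; false; false; false; false; false; false; true; false; false; false; false], [:: false; true; true; false; true; false; false; true]);
  ([:: false; false; false; false; false; false; false; false; false; true; false; false], [:: false; true; false; true; true; false; false; true]);
  ([:: false; false; false; false; false; false; false; false; false; false; false; true], [:: false; true; true; false; false; true; false; true]);
  ([:: false; false; false; false; false; false; false; true; false; true; false; true], [:: false; false; true; true; true; true; true; true]);
  ([:: false; false; false; false; false; false; false; false; false; true; false; true], [:: false; true; true; false; true; false; true; false]);
  ([:: false; false; false; false; false; false; false; true; false; false; true; false], [:: false; true; false; true; true; false; true; false]);
  ([:: false; false; false; false; false; false; false; true; false; true; false; false], [:: false; true; true; false; false; true; true; false]);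
  ([:: false; false; false; false; false; false; false; false; false; false; false; false], [:: false; true; false; true; false; true; true; false]);
  ([:: false; false; false; false; false; false; false; false; false; false; false; false], [:: false; true; true; false; true; false; false; true]);
  ([:: false; false; false; false; false; false; false; true; false; true; false; false], [:: false; true; false; true; true; false; false; true]);
  ([:: false; false; false; false; false; false; false; true; false; false; true; false], [:: false; true; true; false; false; true; false; true]);
  ([:: false; false; false; false; false; false; false; false; false; true; false; true], [:: false; true; false; true; false; true; false; true]);
  ([:: false; false; false; false; false; false; false; true; false; false; false; true], [:: false; true; true; false; true; false; true; false]);
  ([:: false; false; false; false; false; false; false; false; false; true; true; false], [:: false; true; false; true; true; false; true; false]);
  ([:: false; false; false; false; false; false; false; false; false; false; false; false], [:: false; true; true; false; false; true; true; false]);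
  ([:: false; false; false; false; false; false; false; true; false; true; false; false], [:: false; true; false; true; false; true; true; false]);
  ([:: false; false; false; false; false; false; false; true; false; true; false; false], [:: false; true; true; false; true; false; false; true]);
  ([:: false; false; false; false; false; false; false; false; false; false; false; false], [:: false; true; false; true; true; false; false; true]);
  ([:: false; false; false; false; false; false; false; false; false; true; true; false], [:: false; true; true; false; false; true; false; true]);
  ([:: false; false; false; false; false; false; false; true; false; false; false; true], [:: false; true; false; true; false; true; false; true]);
  ([:: false; false; false; false; false; false; false; false; false; false; false; true], [:: false; true; true; false; true; false; true; false]);
  ([:: false; false; false; false; false; false; false; true; false; true; true; false], [:: false; false; true; true; true; true; true; true]);
  ([:: false; false; false; false; false; false; false; true; false; false; false; false], [:: false; true; true; false; false; true; true; false]);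
  ([:: false; false; false; false; false; false; false; false; false; true; false; false], [:: false; true; false; true; false; true; true; false]);
  ([:: false; false; false; false; false; false; false; false; false; true; false; false], [:: false; true; true; false; true; false; false; true]);
  ([:: false; false; false; false; false; false; false; true; false; false; false; false], [:: false; true; false; true; true; false; false; true]);
  ([:: false; false; false; false; false; false; false; true; false; true; true; false], [:: false; false; true; true; true; true; true; true]);
  ([:: false; false; false; false; false; false; false; false; false; false; false; true], [:: false; true; false; true; false; true; false; true]);
  ([:: false; false; false; false; false; false; false; true; false; true; false; false], [:: false; true; true; false; true; false; true; false]);
  ([:: false; false; false; false; false; false; false; false; false; false; false; false], [:: false; true; false; true; true; false; true; false]);
  ([:: false; false; false; false; false; false; false; false; false; true; true; false], [:: false; true; true; false; false; true; true; false]);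
  ([:: false; false; false; false; false; false; false; true; false; false; false; true], [:: false; true; false; true; false; true; true; false]);
  ([:: false; false; false; false; false; false; false; true; false; false; false; true], [:: false; true; true; false; true; false; false; true]);
  ([:: false; false; false; false; false; false; false; false; false; true; true; false], [:: false; true; false; true; true; false; false; true]);
  ([:: false; false; false; false; false; false; false; false; false; false; false; false], [:: false; true; true; false; false; true; false; true]);
  ([:: false; false; false; false; false; false; false; true; false; true; false; false], [:: false; true; false; true; false; true; false; true]);
  ([:: false; false; false; false; false; false; false; false; false; true; false; false], [:: false; true; true; false; true; false; true; false]);
  ([:: false; false; false; false; false; false; false; true; false; false; false; false], [:: false; true; false; true; true; false; true; false]);
  ([:: false; false; false; false; false; false; false; true; false; true; true; false], [:: false; false; true; true; true; true; true; true]);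
  ([:: false; false; false; false; false; false; false; false; false; false; false; true], [:: false; true; false; true; false; true; true; false]);
  ([:: false; false; false; false; false; false; false; false; false; false; false; true], [:: false; true; true; false; true; false; false; true]);
  ([:: false; false; false; false; false; false; false; true; false; true; true; false], [:: false; false; true; true; true; true; true; true]);
  ([:: false; false; false; false; false; false; false; true; false; false; false; false], [:: false; true; true; false; false; true; false; true]);
  ([:: false; false; false; false; false; false; false; false; false; true; false; false], [:: false; true; false; true; false; true; false; true]);
  ([:: false; false; false; false; false; false; false; true; false; false; false; false], [:: false; true; true; false; true; false; true; false]);
  ([:: false; false; false; false; false; false; false; false; false; true; false; false], [:: false; true; false; true; true; false; true; false]);
  ([:: false; false; false; false; false; false; false; false; false; false; false; true], [:: false; true; true; false; false; true; true; false]);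
  ([:: false; false; false; false; false; false; false; true; false; true; false; true], [:: false; false; true; true; true; true; true; true]);
  ([:: false; false; false; false; false; false; false; true; false; true; false; true], [:: false; false; true; true; true; true; true; true]);
  ([:: false; false; false; false; false; false; false; false; false; false; false; true], [:: false; true; false; true; true; false; false; true]);
  ([:: false; false; false; false; false; false; false; false; false; true; false; false], [:: false; true; true; false; false; true; false; true]);
  ([:: false; false; false; false; false; false; false; true; false; false; false; false], [:: false; true; false; true; false; true; false; true]);
  ([:: false; false; false; false; false; false; false; false; false; false; false; false], [:: false; true; true; false; true; false; true; false]);
  ([:: false; false; false; false; false; false; false; true; false; true; false; false], [:: false; true; false; true; true; false; true; false]);
  ([:: false; false; false; false; false; false; false; true; false; false; true; false], [:: false; true; true; false; false; true; true; false]);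
  ([:: false; false; false; false; false; false; false; false; false; true; false; true], [:: false; true; false; true; false; true; true; false]);
  ([:: false; false; false; false; false; false; false; false; false; true; false; true], [:: false; true; true; false; true; false; false; true]);
  ([:: false; false; false; false; false; false; false; true; false; false; true; false], [:: false; true; false; true; true; false; false; true]);
  ([:: false; false; false; false; false; false; false; true; false; true; false; false], [:: false; true; true; false; false; true; false; true]);
  ([:: false; false; false; false; false; false; false; false; false; false; false; false], [:: false; true; false; true; false; true; false; true])].
Definition eidx (x y : nat) : nat :=
  match x, y with
  | 0, 1 | 1, 0 => 0 | 0, 2 | 2, 0 => 1 | 0, 3 | 3, 0 => 2
  | 1, 2 | 2, 1 => 3 | 1, 3 | 3, 1 => 4 | _, _ => 5 end.
Definition sig4 (bs : seq bool) : rel 'I_4 := fun a b => nth false bs (eidx a b).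
Definition adj4 : rel 'I_4 := fun a b => a != b.
Definition c4 (cs : seq bool) (P Q : 'I_4 * bool) : bool :=
  if val P.1 < val Q.1 then nth false cs (2 * eidx P.1 Q.1 + P.2)
  else nth false cs (2 * eidx P.1 Q.1 + Q.2).
Definition f4 (fs : seq bool) (P : 'I_4 * bool) : bool := nth false fs (2 * val P.1 + P.2).
Definition num6 (bs : seq bool) : nat := foldr (fun (b : bool) (n : nat) => nat_of_bool b + n.*2) 0 bs.
Definition cs_of bs := (nth ([::], [::]) cert_tab (num6 bs)).1.
Definition fs_of bs := (nth ([::], [::]) cert_tab (num6 bs)).2.

Definition o4 (k : nat) (h : k < 4) : 'I_4 := Ordinal h.
Definition V8 : seq ('I_4 * bool) :=
  [:: (@o4 0 isT, false); (@o4 0 isT, true); (@o4 1 isT, false); (@o4 1 isT, true);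
      (@o4 2 isT, false); (@o4 2 isT, true); (@o4 3 isT, false); (@o4 3 isT, true)].
Lemma V8P (P : 'I_4 * bool) : P \in V8.
Proof. by case: P => [[[|[|[|[|m]]]] Hm] []]. Qed.

Definition cert_ok (bs : seq bool) : bool :=
  let E := Dedge adj4 (sig4 bs) in
  let c := c4 (cs_of bs) in let f := f4 (fs_of bs) in
  all (fun P => all (fun Q =>
     E P Q ==> (c P Q (+) c (tau P) (tau Q) == ~~ (f P (+) f Q))) V8) V8 &&
  all (fun P1 => all (fun P2 => E P1 P2 ==>
     all (fun P4 => E P1 P4 ==> all (fun P3 =>
        (E P2 P3 && E P4 P3) ==> (c P1 P2 (+) c P2 P3 (+) c P4 P3 (+) c P1 P4 == false)) V8) V8) V8) V8.

Definition B2 := [:: false; true].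
Definition all_okb := all (fun b0 => all (fun b1 => all (fun b2 => all (fun b3 =>
  all (fun b4 => all (fun b5 => cert_ok [:: b0; b1; b2; b3; b4; b5]) B2) B2) B2) B2) B2) B2.
Lemma all_ok : all_okb.
Proof. by vm_compute. Qed.

Lemma cert_okP bs : cert_ok bs -> certH adj4 (sig4 bs) (c4 (cs_of bs)) (f4 (fs_of bs)).
Proof.
case/andP => /allP H1 /allP H2; split.
- move=> P Q E. move: (H1 P (V8P P)) => /allP /(_ Q (V8P Q)).
  by rewrite E => /eqP.
- move=> P1 P2 P3 P4 E12 E23 E14 E43.
  move: (H2 P1 (V8P P1)) => /allP /(_ P2 (V8P P2)); rewrite E12 implyTb.
  move/allP => /(_ P4 (V8P P4)); rewrite E14 implyTb.
  move/allP => /(_ P3 (V8P P3)); rewrite E23 E43 implyTb.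
  by move/eqP.
Qed.

Lemma cert6 b0 b1 b2 b3 b4 b5 : cert_ok [:: b0; b1; b2; b3; b4; b5].
Proof.
have inB (b : bool) : b \in B2 by case: b.
have := all_ok; rewrite /all_okb.
move/allP/(_ _ (inB b0))/allP/(_ _ (inB b1))/allP/(_ _ (inB b2)).
move/allP/(_ _ (inB b3))/allP/(_ _ (inB b4))/allP/(_ _ (inB b5)).
done.
Qed.

Lemma sig4_sym (S : rel 'I_4) (a b : 'I_4) : a != b ->
  let bs := [:: S (@o4 0 isT) (@o4 1 isT); S (@o4 0 isT) (@o4 2 isT); S (@o4 0 isT) (@o4 3 isT);
                S (@o4 1 isT) (@o4 2 isT); S (@o4 1 isT) (@o4 3 isT); S (@o4 2 isT) (@o4 3 isT)] in
  sig4 bs a b = S a b \/ sig4 bs a b = S b a.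
Proof.
case: a => [[|[|[|[|m]]]] Ha] //; case: b => [[|[|[|[|n]]]] Hb] //= _;
  rewrite /sig4 /o4 /=;
  (try by left; congr S; apply: val_inj); (try by right; congr S; apply: val_inj).
Qed.

Lemma certT (T : finType) (adj sg : rel T) (x0 : T) :
  #|T| <= 4 -> irreflexive adj ->
  (forall u v, adj u v -> sg u v = sg v u) ->
  exists c f, certH adj sg c f.
Proof.
move=> hT irr sgs.
pose e (x : T) : 'I_4 := widen_ord hT (enum_rank x).
have einj : injective e.
  move=> x y /(congr1 val) /= H; apply: enum_rank_inj; exact: val_inj.
pose inv (a : 'I_4) : T := odflt x0 [pick x | e x == a].
have invK : forall x, inv (e x) = x.
  move=> x; rewrite /inv; case: pickP => [y /eqP /einj -> // | H].
  by have := H x; rewrite eqxx.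
pose S (a b : 'I_4) := sg (inv a) (inv b).
pose bs := [:: S (@o4 0 isT) (@o4 1 isT); S (@o4 0 isT) (@o4 2 isT); S (@o4 0 isT) (@o4 3 isT);
                S (@o4 1 isT) (@o4 2 isT); S (@o4 1 isT) (@o4 3 isT); S (@o4 2 isT) (@o4 3 isT)].
have [C1 C3] := cert_okP (cert6 (S (@o4 0 isT) (@o4 1 isT)) (S (@o4 0 isT) (@o4 2 isT))
   (S (@o4 0 isT) (@o4 3 isT)) (S (@o4 1 isT) (@o4 2 isT)) (S (@o4 1 isT) (@o4 3 isT))
   (S (@o4 2 isT) (@o4 3 isT))).
pose eP (P : T * bool) := (e P.1, P.2).
have tr : forall P Q, Dedge adj sg P Q -> Dedge adj4 (sig4 bs) (eP P) (eP Q).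
  move=> [x s] [y t] /andP [hxy /eqP hs]; rewrite /Dedge /=.
  have neq : e x != e y.
    by apply/negP => /eqP /einj exy; rewrite exy irr in hxy.
  apply/andP; split; first exact: neq.
  have := sig4_sym S neq; rewrite /= -/bs => -[h|h]; rewrite h /S !invK.
    by rewrite hs.
  by rewrite -sgs // hs.
exists (fun P Q => c4 (cs_of bs) (eP P) (eP Q)), (fun P => f4 (fs_of bs) (eP P)).
split.
- move=> P Q E; exact: (C1 _ _ (tr _ _ E)).
- move=> P1 P2 P3 P4 E12 E23 E14 E43.
  exact: (C3 _ _ _ _ (tr _ _ E12) (tr _ _ E23) (tr _ _ E14) (tr _ _ E43)).
Qed.

Lemma nohom (p q : nat) (hp : 1 <= p) (hq : 3 <= q) (H : sgraph) phi :
  simple_sgraph H -> @sg_hom (sg_box (UC q) (BC (2 * p + 1))) H phi -> 4 < #|svert H|.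
Proof.
move=> [Hsym [Hirr Hsg]] [hadj [X hsg]].
rewrite ltnNge; apply/negP => hH.
case: q hq X phi hadj hsg => [//|q'] hq X phi hadj hsg.
set N := 2 * p + 1.
have oddN : odd N by rewrite /N addn1 /= mul2n odd_double.
have j0 : 0 < N by rewrite /N addn1.
have [c [f cert]] := certT (phi (ord0, Ordinal j0)) hH Hirr Hsg.
pose psi u := (phi u, u \in X).
have E0 : forall u v, sadj (sg_box (UC q'.+1) (BC N)) u v ->
    ssign (sg_box (UC q'.+1) (BC N)) u v = false ->
    Dedge (sadj H) (ssign H) (psi u) (psi v).
  move=> u v a s; rewrite /Dedge /= hadj //= hsg // /switch_sign s /=. by [].
have E1 : forall u v, sadj (sg_box (UC q'.+1) (BC N)) u v ->
    ssign (sg_box (UC q'.+1) (BC N)) u v = true ->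
    Dedge (sadj H) (ssign H) (psi u) (tau (psi v)).
  move=> u v a s; rewrite /Dedge /= hadj //= hsg // /switch_sign s /=.
  by rewrite addbN addNb.
pose Q (i : nat) (j : 'I_N) := if i < q'.+1 then psi (inord i, j) else tau (psi (inord 0, j)).
apply: (@core _ _ _ c f N q'.+1 Q cert oddN).
- have Erow : forall (i : 'I_q'.+1) j, Dedge (sadj H) (ssign H) (psi (i, j)) (psi (i, ordS j)).
    by move=> i j; apply: E0; rewrite /= eqxx // /cycle_adj /= eqxx.
  move=> i j; rewrite leq_eqVlt => /orP [/eqP -> | lt].
    by rewrite /Q ltnn; apply: Dedge_tau.
  by rewrite /Q lt.
- move=> i j lt; rewrite /Q lt; case: ltnP => lt2.
    have vi : val (inord i : 'I_q'.+1) = i := inordK (ltnW lt2).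
    have vi1 : val (inord i.+1 : 'I_q'.+1) = i.+1 := inordK lt2.
    have ne : (inord i : 'I_q'.+1) != inord i.+1.
      by apply/eqP => /(congr1 val); rewrite vi vi1 => /n_Sn.
    apply: E0 => /=.
      by apply/orP; right; rewrite eqxx /cycle_adj /= vi vi1 (modn_small lt2) eqxx.
    rewrite ifF; last exact: negbTE ne.
    rewrite vi vi1 /=; apply/negbTE/negP; case/orP => /andP [/eqP e1 /eqP e2].
      by subst; rewrite ltnn in lt2.
    by subst.
  have ei : i = q' by apply/eqP; rewrite eqn_leq -ltnS lt -ltnS lt2.
  subst i.
  have vq : val (inord q' : 'I_q'.+1) = q' := inordK (ltnSn q').
  have v0 : val (inord 0 : 'I_q'.+1) = 0 := inordK (ltn0Sn q').
  have ne : (inord q' : 'I_q'.+1) != inord 0.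
    by apply/eqP => /(congr1 val); rewrite vq v0 => e0; rewrite e0 in hq.
  apply: E1 => /=.
    by apply/orP; right; rewrite eqxx /cycle_adj /= vq v0 modnn eqxx.
  rewrite ifF; last exact: negbTE ne.
  by rewrite vq v0 /= !eqxx.
- by move=> j; rewrite /Q ltnn.
Qed.


Lemma min_ex (P : nat -> Prop) n : P n -> exists m, P m /\ forall k, P k -> m <= k.
Proof.
elim: n {-2}n (leqnn n) => [|n IH] m Hm Pm.
  by exists m; split => // k _; move: Hm; rewrite leqn0 => /eqP ->.
case: (Classical_Prop.classic (exists k, P k /\ k < m)) => [[k [Pk lt]]|nk].
  apply: (IH k) => //; rewrite -ltnS; exact: leq_trans lt Hm.
exists m; split => // k Pk; rewrite leqNgt; apply/negP => lt; apply: nk; by exists k.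
Qed.

Lemma cycle_adj_sym (k : nat) : symmetric (@cycle_adj k).
Proof. by move=> i j; rewrite /cycle_adj orbC. Qed.

Lemma cycle_irr (k : nat) : 1 < k -> irreflexive (@cycle_adj k).
Proof.
move=> k1 i; rewrite /cycle_adj orbb; apply/negbTE/eqP => h.
have := ltn_ord i; rewrite leq_eqVlt => /orP [/eqP e|lt].
  rewrite e modnn in h; rewrite h in e; subst k; by [].
rewrite modn_small // in h; by move: h => /n_Sn.
Qed.

Theorem lemma6p1 (p q : nat) (hp : 1 <= p) (hq : 3 <= q) :
  exists n : nat, is_signed_chi (sg_box (UC q) (BC (2 * p + 1))) n /\ 4 < n.
Proof.
pose G := sg_box (UC q) (BC (2 * p + 1)).
pose P n := exists H, simple_sgraph H /\ #|svert H| = n /\ exists phi, @sg_hom G H phi.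
have PG : P #|svert G|.
  exists G; split; last split => //.
    split; [|split].
    - move=> x y /=; rewrite (eq_sym x.1) (eq_sym x.2).
      by rewrite (cycle_adj_sym _ x.2) (cycle_adj_sym _ x.1).
    - move=> x /=; rewrite !eqxx /= !cycle_irr //.
        by apply: leq_trans hq.
      by rewrite addn1 ltnS muln_gt0.
    - move=> u v _ /=; rewrite [u.1 == _]eq_sym; case: (_ == _) => //; by rewrite orbC.
  exists id; split => //; exists set0 => u v a.
  by rewrite /switch_sign !inE /= !addbF.
have [n [Pn nmin]] := min_ex PG.
exists n; split.
  split => // H phi sH hom; apply: nmin; exists H; split => //; split => //; by exists phi.
have [H [sH [<- [phi hom]]]] := Pn.
exact: (@nohom p q hp hq H phi sH hom).
Qed.
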